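(* For every positive integer $n$, the number of symmetric gapsets in $\mathcal{G}_{2n}(3n+1)$ is $2^{n-1}$.
   Context: A gapset is a finite set $G\subset\mathbb{N}=\{1,2,\dots\}$ such that whenever $z\in G$ and $z=x+y$ with $x,y\in\mathbb{N}$, then $x\in G$ or $y\in G$; its genus is $g=\#G$. Writing $G=\{\ell_1<\dots<\ell_g\}$, the Frobenius number is $F(G)=\ell_g$; $G$ is symmetric if $F(G)=2g-1$. $G$ is pure $\kappa$-sparse if $\ell_{i+1}-\ell_i\le\kappa$ for all $i$ with equality for some $i$; $\mathcal{G}_\kappa(g)$ is the set of pure $\kappa$-sparse gapsets of genus $g$. *)

(* Defs.v *)
From mathcomp Require Import all_boot all_order.
From mathcomp Require Import finmap.
Set Implicit Arguments. Unset Strict Implicit. Unset Printing Implicit Defensive.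
Local Open Scope fset_scope.

Definition is_gapset (G : {fset nat}) : Prop :=
  (forall z, z \in G -> 0 < z) /\
  (forall x y, 0 < x -> 0 < y -> (x + y)%N \in G -> (x \in G) \/ (y \in G)).

Definition genus (G : {fset nat}) : nat := #|` G|.

(* Frobenius number: largest element (0 for the empty set). *)
Definition frob (G : {fset nat}) : nat := \max_(x <- G) x.

Definition symmetric_gapset (G : {fset nat}) : Prop :=
  frob G = 2 * genus G - 1.

Definition elems (G : {fset nat}) : seq nat := sort leq G.

Definition pure_sparse (kappa : nat) (G : {fset nat}) : Prop :=
  let s := elems G in
  (forall i, i.+1 < size s -> nth 0 s i.+1 - nth 0 s i <= kappa) /\
  (exists i, i.+1 < size s /\ nth 0 s i.+1 - nth 0 s i = kappa).

Definition in_Gk (kappa g : nat) (G : {fset nat}) : Prop :=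
  is_gapset G /\ genus G = g /\ pure_sparse kappa G.

(* Main.v *)
Require Import Defs.
From mathcomp Require Import all_boot all_order.
From mathcomp Require Import finmap.
From mathcomp Require Import zify.
Set Implicit Arguments. Unset Strict Implicit. Unset Printing Implicit Defensive.


Lemma nth_lt (s : seq nat) i j : sorted ltn s -> i < size s -> j < size s ->
  (nth 0 s i < nth 0 s j) = (i < j).
Proof.
move=> ss hi hj.
have H := sorted_ltn_nth ltn_trans 0 ss.
case: (ltngtP i j) => h.
- by apply: H.
- apply/negbTE; rewrite -leqNgt ltnW //; exact: H.
- by rewrite h ltnn.
Qed.

Lemma consec1 (s : seq nat) i (c : nat) : sorted ltn s -> i.+1 < size s -> c \in s ->
  nth 0 s i < c -> c < nth 0 s i.+1 -> False.
Proof.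
move=> ss hi cs h1 h2.
have hj : index c s < size s by rewrite index_mem.
rewrite -(nth_index 0 cs) in h1 h2.
rewrite nth_lt // in h1; last lia.
rewrite nth_lt // in h2. lia.
Qed.

Lemma consec2 (s : seq nat) (a b : nat) : sorted ltn s -> a \in s -> b \in s -> a < b ->
  (forall c : nat, c \in s -> a < c -> c < b -> False) ->
  exists i, i.+1 < size s /\ nth 0 s i = a /\ nth 0 s i.+1 = b.
Proof.
move=> ss as_ bs ab hc.
have hi : index a s < size s by rewrite index_mem.
have hj : index b s < size s by rewrite index_mem.
have hij : index a s < index b s.
  by rewrite -(nth_lt ss hi hj) !nth_index.
case: (ltngtP (index a s).+1 (index b s)) => h.
- exfalso; apply: (hc (nth 0 s (index a s).+1)).
  + apply: mem_nth; exact: ltn_trans h hj.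
  + by rewrite -{1}(nth_index 0 as_) nth_lt //; exact: ltn_trans h hj.
  + by rewrite -{1}(nth_index 0 bs) nth_lt //; exact: ltn_trans h hj.
- lia.
- exists (index a s); split; first by rewrite h.
  by rewrite h !nth_index.
Qed.

Lemma elems_sorted (G : {fset nat}) : sorted ltn (elems G).
Proof.
by rewrite ltn_sorted_uniq_leq sort_uniq fset_uniq sort_sorted //; exact: leq_total.
Qed.

Lemma mem_elems (G : {fset nat}) x : (x \in elems G) = (x \in G).
Proof. by rewrite mem_sort. Qed.

Definition consec (G : {fset nat}) (a b : nat) :=
  a \in G /\ b \in G /\ a < b /\ (forall c : nat, c \in G -> a < c -> c < b -> False).

Lemma pure_sparseP k (G : {fset nat}) :
  pure_sparse k G <->
  ((forall a b, consec G a b -> b - a <= k) /\ (exists a b, consec G a b /\ b - a = k)).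
Proof.
have ss := elems_sorted G.
split.
- case=> H1 [i [hi hk]]; split.
  + move=> a b [aG [bG [ab hc]]].
    have hc' : forall c : nat, c \in elems G -> a < c -> c < b -> False.
      by move=> c; rewrite mem_elems; apply: hc.
    have aG' : a \in elems G by rewrite mem_elems.
    have bG' : b \in elems G by rewrite mem_elems.
    have [j0 [h0 [e1 e2]]] := consec2 ss aG' bG' ab hc'.
    by rewrite -e1 -e2; apply: H1.
  + exists (nth 0 (elems G) i), (nth 0 (elems G) i.+1); split => //.
    split; first by rewrite -mem_elems; apply: mem_nth; exact: ltnW hi.
    split; first by rewrite -mem_elems; apply: mem_nth; exact: hi.
    split; first by rewrite nth_lt // ltnW.
    by move=> c; rewrite -mem_elems => cG h1 h2; apply: (consec1 ss hi cG h1 h2).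
- case=> H1 [a [b [hab hk]]]; split.
  + move=> i hi; apply: H1.
    split; first by rewrite -mem_elems; apply: mem_nth; exact: ltnW hi.
    split; first by rewrite -mem_elems; apply: mem_nth; exact: hi.
    split; first by rewrite nth_lt // ltnW.
    by move=> c; rewrite -mem_elems => cG h1 h2; apply: (consec1 ss hi cG h1 h2).
  + case: hab => aG [bG [ab hc]].
    have hc' : forall c : nat, c \in elems G -> a < c -> c < b -> False.
      by move=> c; rewrite mem_elems; apply: hc.
    have aG' : a \in elems G by rewrite mem_elems.
    have bG' : b \in elems G by rewrite mem_elems.
    have [j0 [h0 [e1 e2]]] := consec2 ss aG' bG' ab hc'.
    by exists j0; split => //; rewrite e1 e2.
Qed.

Lemma max_mem (s : seq nat) : 0 < \max_(x <- s) x -> \max_(x <- s) x \in s.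
Proof.
elim: s => [|a s IH]; first by rewrite big_nil.
rewrite big_cons inE => h.
case: (leqP a (\max_(x <- s) x)) => ha.
- by rewrite (maxn_idPr ha) in h; rewrite IH ?orbT.
- by rewrite eqxx.
Qed.

Lemma frob_ub (G : {fset nat}) x : x \in G -> x <= frob G.
Proof. by move=> h; rewrite /frob; apply: (@leq_bigmax_seq _ _ xpredT (fun x : nat => x) x h). Qed.

Lemma frob_mem (G : {fset nat}) : 0 < frob G -> frob G \in G.
Proof. exact: max_mem. Qed.

Lemma frob_le (G : {fset nat}) m : (forall x, x \in G -> x <= m) -> frob G <= m.
Proof. by move=> h; apply/bigmax_leqP_seq => i hi _; apply: h. Qed.

Lemma card_count (G : {fset nat}) N : (forall x, x \in G -> 0 < x <= N) ->
  #|` G| = count (mem G) (iota 1 N).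
Proof.
move=> hG; rewrite -size_filter.
change #|` G| with (size (enum_fset G)).
apply: perm_size; apply: uniq_perm; first exact: fset_uniq.
  by apply: filter_uniq; exact: iota_uniq.
move=> x; rewrite mem_filter mem_iota /=.
case xG: (x \in enum_fset G) => //=.
have := hG x xG; lia.
Qed.

Lemma count_sym (p : pred nat) M :
  count (fun x => p (M.+1 - x)) (iota 1 M) = count p (iota 1 M).
Proof.
rewrite -(count_map (fun x => M.+1 - x) p).
rewrite (_ : map _ _ = rev (iota 1 M)) ?count_rev //.
apply: (@eq_from_nth _ 0); first by rewrite size_map size_rev.
rewrite size_map size_iota => i hi.
rewrite (nth_map 0) ?size_iota // nth_rev ?size_iota // !nth_iota //; lia.
Qed.

Definition pat (n : nat) (B : seq bool) (x : nat) : bool :=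
  if x < 2*n then true
  else if x == 2*n then false
  else if x == 2*n+1 then true
  else if x <= 3*n then nth false B (x - (2*n+2))
  else if x < 4*n then ~~ nth false B (4*n-1-x)
  else if x == 4*n then false
  else if x == 4*n+1 then true
  else if x <= 6*n then false
  else if x == 6*n+1 then true else false.

Lemma pat_sym n B x : 0 < n -> 1 <= x <= 6*n -> pat n B (6*n+1-x) = ~~ pat n B x.
Proof.
move=> hn hx; rewrite /pat.
repeat case: ifP => ?; try lia; rewrite ?negbK //;
  (try congr (~~ _)); congr (nth _ _ _); lia.
Qed.

Definition mkG n B : {fset nat} := [fset x in [seq x <- iota 1 (6*n+1) | pat n B x]]%fset.

Lemma mem_mkG n B x : (x \in mkG n B) = (0 < x <= 6*n+1) && pat n B x.
Proof.
rewrite /mkG in_fset mem_filter mem_iota andbC.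
congr (_ && _); apply/idP/idP; lia.
Qed.

Lemma pat_B n B i : i < n - 1 -> pat n B (2*n+2+i) = nth false B i.
Proof.
move=> hi; rewrite /pat.
rewrite ifF; last lia. rewrite ifF; last lia. rewrite ifF; last lia.
rewrite ifT; last lia. congr (nth _ _ _); lia.
Qed.

Fixpoint bits k : seq (seq bool) :=
  if k is k'.+1 then [seq true :: b | b <- bits k'] ++ [seq false :: b | b <- bits k']
  else [:: [::]].

Lemma size_bits k : size (bits k) = 2 ^ k.
Proof. by elim: k => [|k IH] //=; rewrite size_cat !size_map IH expnS mul2n addnn. Qed.

Lemma mem_bits k b : (b \in bits k) = (size b == k).
Proof.
elim: k b => [|k IH] b.
  by case: b.
case: b => [|[] b] /=; rewrite mem_cat.
- by apply/negbTE/norP; split; apply/mapP; case.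
- rewrite mem_map; last by move=> ? ? [].
  have -> : (true :: b \in [seq false :: b0 | b0 <- bits k]) = false.
    by apply/negbTE/mapP; case.
  by rewrite IH orbF.
- rewrite (mem_map); last by move=> ? ? [].
  have -> : (false :: b \in [seq true :: b0 | b0 <- bits k]) = false.
    by apply/negbTE/mapP; case.
  by rewrite IH.
Qed.

Lemma uniq_bits k : uniq (bits k).
Proof.
elim: k => [|k IH] //=.
rewrite cat_uniq !map_inj_uniq ?IH //=; try by move=> ? ? [].
rewrite andbT; apply/hasPn => x /mapP [c _ ->]; apply/mapP; by case.
Qed.

Ltac patcase := rewrite /pat; repeat (case: ifP => ?); try lia.

Lemma pat_hi n B z : 0 < n -> 4*n <= z -> pat n B z -> z = 4*n+1 \/ z = 6*n+1 \/ 6*n+1 < z.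
Proof. move=> hn hz; patcase; by []. Qed.

Lemma pat_lo n B x : x < 2*n -> pat n B x.
Proof. by move=> h; rewrite /pat h. Qed.
Lemma pat_2n1 n B : 0 < n -> pat n B (2*n+1).
Proof. by move=> hn; patcase. Qed.
Lemma pat_4n1 n B : 0 < n -> pat n B (4*n+1).
Proof. by move=> hn; patcase. Qed.
Lemma pat_F n B : 0 < n -> pat n B (6*n+1).
Proof. by move=> hn; patcase. Qed.
Lemma pat_2n n B : 0 < n -> pat n B (2*n) = false.
Proof. by move=> hn; patcase. Qed.
Lemma pat_top n B x : 0 < n -> 4*n+1 < x <= 6*n -> pat n B x = false.
Proof. by move=> hn hx; patcase. Qed.

Lemma count_pat n B : 0 < n -> count (pat n B) (iota 1 (6*n+1)) = 3*n+1.
Proof.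
move=> hn.
rewrite iotaD count_cat /= (addnC 1 (6*n)) pat_F // addn0.
congr (_ + _).
have h1 := count_sym (pat n B) (6*n).
have h2 : count (fun x => pat n B ((6*n).+1 - x)) (iota 1 (6*n))
        = count (predC (pat n B)) (iota 1 (6*n)).
  apply: eq_in_count => x; rewrite mem_iota => hx /=.
  rewrite -addn1 addnC -[1 + _]addnC pat_sym //; lia.
have h3 := count_predC (pat n B) (iota 1 (6*n)).
rewrite size_iota in h3.
lia.
Qed.

Lemma mkG_good n B : 0 < n ->
  in_Gk (2*n) (3*n+1) (mkG n B) /\ symmetric_gapset (mkG n B).
Proof.
move=> hn.
have hgen : genus (mkG n B) = 3*n+1.
  rewrite /genus /mkG card_fseq undup_id ?size_filter ?count_pat //.
  by apply: filter_uniq; exact: iota_uniq.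
have hF : 6*n+1 \in mkG n B by rewrite mem_mkG pat_F // andbT; lia.
have hle : forall x, x \in mkG n B -> x <= 6*n+1.
  by move=> x; rewrite mem_mkG => /andP [h _]; lia.
split; last first.
  rewrite /symmetric_gapset hgen.
  have := frob_le hle; have := frob_ub hF; lia.
split.
  split.
    by move=> z; rewrite mem_mkG => /andP [h _]; lia.
  move=> x y hx hy; rewrite !mem_mkG => /andP [hz pz].
  case: (ltnP x (2*n)) => h1.
    by left; rewrite pat_lo // andbT; lia.
  case: (ltnP y (2*n)) => h2.
    by right; rewrite pat_lo // andbT; lia.
  have h4 : 4*n <= x+y by lia.
  have [e|[e|e]] := pat_hi hn h4 pz; try lia.
  - case: (eqVneq x (2*n+1)) => ex.
      by left; rewrite ex pat_2n1 // andbT; lia.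
    have ey : y = 2*n+1 by lia.
    by right; rewrite ey pat_2n1 // andbT; lia.
  - have ey : y = 6*n+1-x by lia.
    have hx6 : 1 <= x <= 6*n by lia.
    have := pat_sym B hn hx6; rewrite -ey => hs.
    case px: (pat n B x).
      by left; rewrite andbT; lia.
    by right; rewrite hs px andbT; lia.
split; first exact: hgen.
apply/pure_sparseP; split.
- move=> a b [aG [bG [ab hc]]].
  have ha : a < 6*n+1 by have := hle b bG; lia.
  suff [c [cG [c1 c2]]] : exists c, c \in mkG n B /\ a < c /\ c <= a + 2*n.
    case: (leqP (b - a) (2*n)) => // hb.
    by exfalso; apply: (hc c cG c1); lia.
  move: aG; rewrite mem_mkG => /andP [ha0 pa].
  case: (ltnP (a.+1) (2*n)) => h1.
    by exists a.+1; rewrite mem_mkG pat_lo // andbT; split => //; lia.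
  case: (eqVneq a (2*n-1)) => h2.
    by exists (2*n+1); rewrite mem_mkG pat_2n1 // andbT; split => //; lia.
  case: (eqVneq a (2*n)) => h3.
    by rewrite h3 pat_2n in pa.
  case: (leqP a (4*n)) => h4.
    by exists (4*n+1); rewrite mem_mkG pat_4n1 // andbT; split => //; lia.
  by exists (6*n+1); rewrite mem_mkG pat_F // andbT; split => //; lia.
- exists (4*n+1), (6*n+1); split; last lia.
  split; first by rewrite mem_mkG pat_4n1 // andbT; lia.
  split; first exact: hF.
  split; first lia.
  move=> c; rewrite mem_mkG => /andP [_ pc] h1 h2.
  by rewrite pat_top in pc; lia.
Qed.

Lemma good_mkG n (G : {fset nat}) : 0 < n ->
  in_Gk (2*n) (3*n+1) G -> symmetric_gapset G ->
  G = mkG n (mkseq (fun i => (2*n+2+i) \in G) (n-1)).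
Proof.
move=> hn [[Gpos Gadd] [hgen hps]] hsym.
move: hsym; rewrite /symmetric_gapset hgen => hfr.
have e : 2*(3*n+1)-1 = 6*n+1 by lia.
rewrite e in hfr.
have Gle : forall x, x \in G -> x <= 6*n+1.
  by move=> x /frob_ub; lia.
have GF : 6*n+1 \in G.
  by have := @frob_mem G; rewrite hfr; apply; lia.
have hcnt : count (mem G) (iota 1 (6*n)) = 3*n.
  have hb : forall x, x \in G -> 0 < x <= 6*n+1.
    by move=> x hx; have := Gpos x hx; have := Gle x hx; lia.
  have := card_count hb.
  rewrite -/(genus G) hgen iotaD count_cat /= (addnC 1 (6*n)).
  by rewrite GF /=; lia.
have Gor : forall x, 1 <= x <= 6*n -> (x \in G) || (6*n+1-x \in G).
  move=> x hx; apply/orP; apply: Gadd; try lia.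
  by rewrite (_ : x + (6*n+1-x) = 6*n+1) //; lia.
have Gsy : forall x, 1 <= x <= 6*n -> (6*n+1-x \in G) = ~~ (x \in G).
  pose p := fun x : nat => x \in G.
  have hc' : count p (iota 1 (6*n)) = 3*n by rewrite -hcnt; apply: eq_count.
  pose q := fun x => p ((6*n).+1 - x).
  have hq : count q (iota 1 (6*n)) = 3*n by rewrite /q count_sym.
  have hU := count_predUI p q (iota 1 (6*n)).
  have hU2 : count (predU p q) (iota 1 (6*n)) = 6*n.
    rewrite -[RHS](size_iota 1) -count_predT; apply: eq_in_count => x.
    rewrite mem_iota /= /q /p => hx; rewrite (_ : (6*n).+1 = 6*n+1); last lia.
    apply: Gor; lia.
  have hI : count (predI p q) (iota 1 (6*n)) = 0.
    by move: hU; rewrite hU2 hq hc'; lia.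
  move=> x hx.
  have := Gor x hx.
  move/eqP: hI; rewrite -leqn0 leqNgt -has_count => /hasPn /(_ x).
  rewrite mem_iota /= /q /p (_ : (6*n).+1 = 6*n+1); last lia.
  have hx' : 1 <= x < 1 + 6*n by lia.
  move=> /(_ hx'); case: (x \in G); case: (6*n+1-x \in G) => //.
have [H1 [a [b [[aG [bG [ab hc]]] hk]]]] := (pure_sparseP _ _).1 hps.
have Glow : forall j, 1 <= j <= 2*n-1 -> j \in G.
  move=> j hj; apply/negPn/negP => jG.
  have eb : b = (a + 2*n - j) + j by lia.
  rewrite eb in bG.
  have p1 : 0 < a + 2*n - j by lia.
  have p2 : 0 < j by lia.
  have [h|h] := Gadd _ _ p1 p2 bG.
    by apply: (hc _ h); lia.
  by rewrite h in jG.
have G4n1 : 4*n+1 \in G.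
  pose P := fun x => (x \in G) && (x < 6*n+1).
  have exP : exists x, P x by exists 1; rewrite /P Glow; lia.
  have ubP : forall x, P x -> x <= 6*n+1 by move=> x /andP [_ h]; lia.
  case: (ex_maxnP exP ubP) => c /andP [cG cF] cmax.
  have hcons : consec G c (6*n+1).
    split; first done. split; first done. split; first done.
    move=> d dG h1 h2.
    have Pd : P d by rewrite /P dG; lia.
    by have := cmax d Pd; lia.
  have := H1 _ _ hcons => hd.
  case: (leqP c (4*n+1)) => hc4.
    by rewrite (_ : 4*n+1 = c) //; lia.
  have hr : 1 <= 6*n+1-c <= 6*n by lia.
  have := Gsy (6*n+1-c) hr.
  rewrite (_ : 6*n+1-(6*n+1-c) = c); last lia.
  by rewrite cG Glow //; lia.
have G2n : (2*n \in G) = false.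
  have hr : 1 <= 2*n <= 6*n by lia.
  have := Gsy _ hr; rewrite (_ : 6*n+1-2*n = 4*n+1); last lia.
  by rewrite G4n1 => /esym/negbTE.
have G4n : (4*n \in G) = false.
  apply/negbTE/negP => h.
  have p1 : 0 < 2*n by lia.
  have := Gadd _ _ p1 p1; rewrite (_ : 2*n+2*n = 4*n); last lia.
  by move=> /(_ h); rewrite G2n; case.
have G2n1 : 2*n+1 \in G.
  have hr : 1 <= 4*n <= 6*n by lia.
  have := Gsy _ hr; rewrite (_ : 6*n+1-4*n = 2*n+1); last lia.
  by rewrite G4n.
have Ghigh : forall x, 4*n+1 < x <= 6*n -> (x \in G) = false.
  move=> x hx.
  have hr : 1 <= 6*n+1-x <= 6*n by lia.
  have := Gsy _ hr; rewrite (_ : 6*n+1-(6*n+1-x) = x); last lia.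
  by rewrite (Glow (6*n+1-x)); [move=> ->|lia].
apply/fsetP => x; rewrite mem_mkG.
case: (posnP x) => [->|x0].
  by apply/negbTE/negP => /Gpos.
case: (leqP x (6*n+1)) => xF; last first.
  by apply/negbTE/negP => /Gle; lia.
rewrite /= /pat.
case: ifP => h1; first by apply: Glow; lia.
case: ifP => h2; first by rewrite (eqP h2).
case: ifP => h3; first by rewrite (eqP h3).
case: ifP => h4.
  rewrite nth_mkseq; last lia.
  by rewrite (_ : 2*n+2+(x-(2*n+2)) = x) //; lia.
case: ifP => h5.
  rewrite nth_mkseq; last lia.
  have hr : 1 <= x <= 6*n by lia.
  have := Gsy _ hr; rewrite (_ : 2*n+2+(4*n-1-x) = 6*n+1-x); last lia.
  by move=> ->; rewrite negbK.
case: ifP => h6; first by rewrite (eqP h6).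
case: ifP => h7; first by rewrite (eqP h7).
case: ifP => h8; first by apply: Ghigh; lia.
case: ifP => h9; first by rewrite (eqP h9).
lia.
Qed.

Theorem mainTheorem4 (n : nat) (hn : 0 < n) :
  exists s : seq {fset nat},
    uniq s /\
    (forall G : {fset nat},
        G \in s <-> (in_Gk (2 * n) (3 * n + 1) G /\ symmetric_gapset G)) /\
    size s = 2 ^ (n - 1).
Proof.
exists (map (mkG n) (bits (n-1))); split.
  rewrite map_inj_in_uniq ?uniq_bits // => B1 B2.
  rewrite !mem_bits => /eqP s1 /eqP s2 e.
  apply: (@eq_from_nth _ false); first by rewrite s1 s2.
  move=> i; rewrite s1 => hi; rewrite -(pat_B B1 hi) -(pat_B B2 hi).
  have := congr1 (fun G => (2*n+2+i) \in G) e; rewrite /= !mem_mkG.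
  have r : 0 < 2*n+2+i <= 6*n+1 by lia.
  by rewrite r.
split; last by rewrite size_map size_bits.
move=> G; split.
  by move=> /mapP [B _ ->]; exact: mkG_good.
move=> [h1 h2]; apply/mapP.
exists (mkseq (fun i => (2*n+2+i) \in G) (n-1)).
  by rewrite mem_bits size_mkseq.
exact: good_mkG.
Qed.
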